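(* Let $a,b,c,d$ be integers with $1=a\le b\le c\le d$ and let $$M=\begin{bmatrix}a&-1&-1&-1\\-1&b&-1&-1\\-1&-1&c&-1\\-1&-1&-1&d\end{bmatrix}.$$ If $\det M=0$, then $b\le5$. Moreover: if $b=3$ and $c\ge7$, then $c=d=7$; if $b=4$, then $c=4$ and $d=9$; if $b=5$, then $c=d=5$. *)

(* Defs.v *)
From mathcomp Require Import all_boot all_order all_algebra.
Set Implicit Arguments. Unset Strict Implicit. Unset Printing Implicit Defensive.
Import GRing.Theory Num.Theory.
Local Open Scope ring_scope.

Definition Mabcd (a b c d : int) : 'M[int]_4 :=
  \matrix_(i < 4, j < 4)
    if i == j then [:: a; b; c; d]`_i else -1.

(* Main.v *)
Require Import Defs.
From mathcomp Require Import all_boot all_order all_algebra zify ring lra.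
Import GRing.Theory Num.Theory.
Local Open Scope ring_scope.
Lemma exp1 n (A : 'M[int]_n.+1) : \det A = \sum_(j < n.+1) A ord0 j * (-1) ^+ (0 + j)%N * \det (row' ord0 (col' j A)).
Proof. rewrite (expand_det_row _ ord0); apply: eq_bigr => j _; by rewrite /cofactor mulrA. Qed.
Lemma detE (a b c d : int) : \det (Mabcd a b c d) = (b+1)*(c+1)*(d+1)*(a+1) - ((b+1)*(c+1)*(d+1)+(a+1)*(c+1)*(d+1)+(a+1)*(b+1)*(d+1)+(a+1)*(b+1)*(c+1)).
Proof.
rewrite !(exp1, big_ord_recr, big_ord0, det_mx00) /=.
rewrite !mxE /=.
ring.
Qed.
Theorem lemma3p7 (a b c d : int) :
  a = 1 -> a <= b -> b <= c -> c <= d ->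
  \det (Mabcd a b c d) = 0 ->
  [/\ b <= 5,
      (b = 3 -> 7 <= c -> c = 7 /\ d = 7),
      (b = 4 -> c = 4 /\ d = 9)
    & (b = 5 -> c = 5 /\ d = 5)].
Proof.
move=> -> h1 h2 h3; rewrite detE => E.
have E' : (b+1)*(c+1)*(d+1) = 2*((c+1)*(d+1)+(b+1)*(d+1)+(b+1)*(c+1)).
  by apply/eqP; rewrite -subr_eq0 -(eqP (introT eqP E)); apply/eqP; ring.
have hb : b <= 5.
  have : (b+1)*(c+1)*(d+1) <= 6*((c+1)*(d+1)) by nia.
  nia.
split => // hb'; subst b.
- move=> hc. 
  have : (c-3)*(d-3) = 16 by nia.
  nia.
- have : (c <= 5) by nia.
  move=> hc; have : c = 4 \/ c = 5 by lia.
  case=> ?; subst c; lia.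
- split; nia.
Qed.
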